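(* Let $p$ be a prime, $X$ a compact space, and $q\in\mathbb{N}$ a prime different from $p$. Then for all $f,g\in C(X,\mathbb{Q}_p)$: $g|^*f$ if and only if there exists $h\in C(X,\mathbb{Q}_p)$ with $h^q=g^q+pf^q$.
   Context: $C(X,\mathbb{Q}_p)$ is the ring of continuous functions $X\to\mathbb{Q}_p$. The canonical $p$-adic divisibility $|^*$ on it is defined by $g|^*f\Leftrightarrow v_p(g(x))\le v_p(f(x))$ for all $x\in X$, where $v_p$ is the $p$-adic valuation (with $v_p(0)=\infty$). *)

(* Defs.v *)
From HB Require Import structures.
From mathcomp Require Import all_boot all_order all_algebra.
From mathcomp Require Import all_classical all_reals all_analysis.
Set Implicit Arguments. Unset Strict Implicit. Unset Printing Implicit Defensive.
Import Order.TTheory GRing.Theory Num.Theory.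
Local Open Scope ring_scope.
Local Open Scope ereal_scope.

Definition vp_rat (p : nat) (r : rat) : \bar int :=
  if r == 0%R then +oo
  else (((logn p `|numq r|%N)%:Z - (logn p `|denq r|%N)%:Z)%R)%:E.

(* A field of p-adic numbers Q_p: a field K with a valuation
   v_p : K -> Z u {+oo} extending the p-adic valuation of Q, in which
   Q is dense and which is complete, i.e. K is the completion of Q
   for the p-adic valuation (this determines Q_p up to unique
   isometric field isomorphism). *)
Record padic_field (p : nat) := PadicField {
  Qp_car :> fieldType;
  vp : Qp_car -> \bar int;
  vp_eq_pinfty : forall x, (vp x == +oo) = (x == 0%R);
  vp_neq_ninfty : forall x, vp x != -oo;
  vpM : forall x y, vp (x * y)%R = vp x + vp y;
  vpD : forall x y, Order.min (vp x) (vp y) <= vp (x + y)%R;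
  vp_ratr : forall r : rat, vp (ratr r) = vp_rat p r;
  vp_dense : forall (x : Qp_car) (n : int),
     exists r : rat, n%:E <= vp (x - ratr r)%R;
  vp_complete : forall u : nat -> Qp_car,
     (forall n : int, exists N : nat, forall i j : nat, (N <= i)%N -> (N <= j)%N ->
        n%:E <= vp (u i - u j)%R) ->
     exists l : Qp_car, forall n : int, exists N : nat, forall i : nat, (N <= i)%N ->
        n%:E <= vp (u i - l)%R
}.

Definition pcont (p : nat) (Qp : padic_field p) (X : topologicalType)
    (f : X -> Qp) : Prop :=
  forall (x : X) (n : int), \forall y \near x, n%:E <= vp (f y - f x)%R.

Definition pdivides (p : nat) (Qp : padic_field p) (X : Type)
    (g f : X -> Qp) : Prop :=
  forall x : X, vp (g x) <= vp (f x).

(* Main.v *)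
Require Import Defs.
From HB Require Import structures.
From mathcomp Require Import all_boot all_order all_algebra.
From mathcomp Require Import all_classical all_reals all_analysis.
Import Order.TTheory GRing.Theory Num.Theory.
Local Open Scope ring_scope.
Local Open Scope classical_set_scope.

Definition ge {p : nat} {Qp : padic_field p} (x : Qp) (n : int) : Prop :=
  (n%:E <= vp x)%E.

Lemma vp0 {p} {Qp : padic_field p} : vp (0 : Qp) = +oo%E.
Proof. by apply/eqP; rewrite vp_eq_pinfty. Qed.

Lemma vp_fin {p} {Qp : padic_field p} {x : Qp} : x != 0 -> exists c : int, vp x = c%:E.
Proof.
move=> nx; case E: (vp x) => [c| |]; first by exists c.
- by move/eqP: E; rewrite vp_eq_pinfty (negbTE nx).
- by have := vp_neq_ninfty x; rewrite E.
Qed.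

Lemma vp1 {p} {Qp : padic_field p} : vp (1 : Qp) = 0%:E.
Proof.
have := vp_ratr Qp 1%:R; rewrite ratr_nat => ->.
by rewrite /vp_rat /= logn1.
Qed.

Lemma vpN1 {p} {Qp : padic_field p} : vp (-1 : Qp) = 0%:E.
Proof.
have := vp_ratr Qp (-1)%:~R; rewrite ratr_int => /= ->.
by rewrite /vp_rat /= logn1.
Qed.

Lemma ge0 {p} {Qp : padic_field p} (n : int) : ge (0 : Qp) n.
Proof. by rewrite /ge vp0 leey. Qed.

Lemma geD {p} {Qp : padic_field p} {x y : Qp} {n} : ge x n -> ge y n -> ge (x + y) n.
Proof.
move=> hx hy; apply: (le_trans _ (vpD x y)).
by rewrite le_min; apply/andP; split.
Qed.

Lemma geM {p} {Qp : padic_field p} {x y : Qp} {n m} : ge x n -> ge y m -> ge (x * y) (n + m).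
Proof. by move=> hx hy; rewrite /ge vpM EFinD; apply: leeD. Qed.

Lemma ge_le {p} {Qp : padic_field p} {x : Qp} {n m} : (m <= n)%R -> ge x n -> ge x m.
Proof. by move=> hmn hx; apply: le_trans hx; rewrite lee_fin. Qed.

Lemma geN {p} {Qp : padic_field p} {x : Qp} {n} : ge x n -> ge (- x) n.
Proof.
move=> hx; rewrite -mulN1r -[n]add0r; apply: geM => //.
by rewrite /ge vpN1.
Qed.

Lemma geB {p} {Qp : padic_field p} {x y : Qp} {n} : ge x n -> ge y n -> ge (x - y) n.
Proof. by move=> hx hy; apply: geD => //; apply: geN. Qed.

Lemma ge_exact {p} {Qp : padic_field p} {x : Qp} {c n} : vp x = c%:E -> ge x n <-> (n <= c)%R.
Proof. by move=> e; rewrite /ge e lee_fin. Qed.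

Lemma ge_all0 {p} {Qp : padic_field p} (x : Qp) : (forall n, ge x n) -> x = 0.
Proof.
move=> h; apply/eqP; apply/negPn/negP => nx.
have [c e] := vp_fin nx.
have := h (c + 1)%R; rewrite (ge_exact e).
by rewrite -subr_ge0 opprD addrA subrr add0r oppr_ge0 ler10.
Qed.

Lemma geX {p} {Qp : padic_field p} {x : Qp} {n} k : ge x n -> ge (x ^+ k) (n *+ k).
Proof.
move=> hx; elim: k => [|k ih]; first by rewrite expr0 mulr0n /ge vp1.
by rewrite exprS mulrS; apply: geM.
Qed.

Lemma ge1 {p} {Qp : padic_field p} : ge (1 : Qp) 0.
Proof. by rewrite /ge vp1. Qed.

Lemma ge_strict {p} {Qp : padic_field p} {a b : Qp} {e} :
  vp a = e%:E -> ge b (e + 1) -> vp (a + b) = e%:E.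
Proof.
move=> ha hb.
have h1 : ge (a + b) e.
  apply: geD; first by rewrite /ge ha.
  by apply: ge_le hb; rewrite lerDl.
have h2 : ~ ge (a + b) (e + 1).
  move=> h; have : ge a (e + 1) by rewrite -(addrK b a); apply: geB.
  by rewrite (ge_exact ha) -subr_ge0 opprD addrA subrr add0r oppr_ge0 ler10.
have nz : a + b != 0 by apply/eqP => e0; apply: h2; rewrite e0; apply: ge0.
have [c ec] := vp_fin nz.
move: h1 h2; rewrite !(ge_exact ec) => h1 h2.
rewrite ec; apply/eqP; rewrite eqe eq_le h1 andbT.
by rewrite -ltzD1 ltNge; apply/negP.
Qed.

Lemma ge_div {p} {Qp : padic_field p} {a y : Qp} {c k} :
  vp a = c%:E -> ge (a * y) (c + k) -> ge y k.
Proof.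
rewrite /ge vpM => ->; case: (vp y) => [m| |] //=.
- by rewrite -EFinD !lee_fin lerD2l.
- by move=> _; apply: leey.
Qed.

Lemma vpX {p} {Qp : padic_field p} {x : Qp} {c} k : vp x = c%:E -> vp (x ^+ k) = (c *+ k)%:E.
Proof.
move=> hx; elim: k => [|k ih]; first by rewrite expr0 vp1.
by rewrite exprS vpM hx ih -EFinD mulrS.
Qed.

Lemma vp_inv {p} {Qp : padic_field p} {x : Qp} {c} : vp x = c%:E -> vp (x^-1) = (- c)%:E.
Proof.
move=> hx.
have nx : x != 0 by rewrite -vp_eq_pinfty hx.
have := vpM x x^-1; rewrite divff // vp1 hx.
case: (vp x^-1) => [m| |] //=.
move=> h; have e : (0:int) = c + m by move: h; rewrite -EFinD => -[].
by rewrite -(addKr c m) -e addr0.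
Qed.

Lemma vp_p {p} {Qp : padic_field p} : prime p -> vp (p%:R : Qp) = 1%:E.
Proof.
move=> pp; have := vp_ratr Qp (p%:Z)%:~R; rewrite ratr_int /= => ->.
rewrite /vp_rat numq_int denq_int /= logn1 (logn_prime p pp) eqxx.
have -> : ((p%:Z)%:~R == 0 :> rat) = false.
  by rewrite intr_eq0 eqz_nat; apply/negbTE; rewrite -lt0n prime_gt0.
by rewrite subr0.
Qed.

Lemma vp_q {p} {Qp : padic_field p} q : prime q -> q != p -> vp (q%:R : Qp) = 0%:E.
Proof.
move=> pq qp; have := vp_ratr Qp (q%:Z)%:~R; rewrite ratr_int /= => ->.
rewrite /vp_rat numq_int denq_int /= logn1 (logn_prime p pq).
have -> : (p == q) = false by rewrite eq_sym; apply/negbTE.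
have -> : ((q%:Z)%:~R == 0 :> rat) = false.
  by rewrite intr_eq0 eqz_nat; apply/negbTE; rewrite -lt0n prime_gt0.
by rewrite subr0.
Qed.

Definition U {p} {Qp : padic_field p} (y : Qp) := ge (y - 1) 1.

Lemma U1 {p} {Qp : padic_field p} : U (1 : Qp).
Proof. by rewrite /U subrr; apply: ge0. Qed.

Lemma U_vp {p} {Qp : padic_field p} {y : Qp} : U y -> vp y = 0%:E.
Proof. by move=> hy; rewrite -(subrK 1 y) addrC; apply: ge_strict; first exact: vp1. Qed.

Lemma U_ge0 {p} {Qp : padic_field p} {y : Qp} : U y -> ge y 0.
Proof. by move/U_vp => h; rewrite /ge h. Qed.

Lemma UM {p} {Qp : padic_field p} {y z : Qp} : U y -> U z -> U (y * z).
Proof.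
move=> hy hz; rewrite /U (_ : y * z - 1 = y * (z - 1) + (y - 1)); last first.
  by rewrite mulrBr mulr1 addrA subrK.
apply: geD => //; have := geM (U_ge0 hy) hz; by rewrite add0r.
Qed.

Lemma UX {p} {Qp : padic_field p} {y : Qp} k : U y -> U (y ^+ k).
Proof.
move=> hy; elim: k => [|k ih]; first by rewrite expr0; apply: U1.
by rewrite exprS; apply: UM.
Qed.

Lemma ge_sum {p} {Qp : padic_field p} k (F : 'I_k -> Qp) n :
  (forall i, ge (F i) n) -> ge (\sum_(i < k) F i) n.
Proof.
move=> h; elim/big_ind: _ => //; first exact: ge0.
by move=> a b; apply: geD.
Qed.

Definition S {p} {Qp : padic_field p} q (y z : Qp) :=
  \sum_(i < q) y ^+ (q.-1 - i) * z ^+ i.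

Lemma S_near_q {p} {Qp : padic_field p} q (y z : Qp) :
  U y -> U z -> ge (q%:R - S q y z) 1.
Proof.
move=> hy hz.
have -> : (q%:R : Qp) = \sum_(i < q) 1 by rewrite sumr_const card_ord.
rewrite /S -sumrB; apply: ge_sum => i.
rewrite -opprB; apply: geN; exact: UM (UX _ hy) (UX _ hz).
Qed.

Lemma S_vp {p} {Qp : padic_field p} q {y z : Qp} :
  prime q -> q != p -> U y -> U z -> vp (S q y z) = 0%:E.
Proof.
move=> pq qp hy hz.
rewrite -(subrK (q%:R) (S q y z)) addrC; apply: ge_strict; first exact: vp_q.
by rewrite -opprB; apply: geN; apply: S_near_q.
Qed.

Lemma U_root_diff {p} {Qp : padic_field p} q {y z : Qp} {k} :
  prime q -> q != p -> U y -> U z -> ge (y ^+ q - z ^+ q) k -> ge (y - z) k.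
Proof.
move=> pq qp hy hz h; apply: (ge_div (S_vp _ pq qp hy hz)).
by rewrite add0r mulrC /S -subrXX.
Qed.

Lemma ge_powdiff {p} {Qp : padic_field p} q {x y : Qp} {c k} :
  ge x c -> ge y c -> ge (x - y) k -> ge (x ^+ q - y ^+ q) (k + c *+ q.-1).
Proof.
move=> hx hy hk; rewrite subrXX; apply: geM => //; apply: ge_sum => i.
have e : (q.-1 - i + i = q.-1)%N.
  by rewrite subnK // -ltnS (ltn_predK (ltn_ord i)) ltn_ord.
rewrite -{2}e mulrnDr; apply: geM; exact: geX.
Qed.

From mathcomp Require Import ring zify.

Lemma root_exists {p} {Qp : padic_field p} q (a : Qp) :
  prime q -> q != p -> U a -> exists y, U y /\ y ^+ q = a.
Proof.
move=> pq qp ha.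
have vq := vp_q (Qp := Qp) q pq qp.
have qnz : (q%:R : Qp) != 0 by rewrite -vp_eq_pinfty vq.
set iq := (q%:R : Qp)^-1.
have viq : vp iq = 0%:E by rewrite (vp_inv vq) oppr0.
have giq : forall n, ge iq n <-> (n <= 0)%R by move=> n; apply: ge_exact.
pose F := fun y : Qp => y - (y ^+ q - a) * iq.
have FU : forall y, U y -> U (F y).
  move=> y hy; rewrite /U /F.
  have -> : y - (y ^+ q - a) * iq - 1 = (y - 1) - ((y ^+ q - 1) - (a - 1)) * iq.
    by ring.
  apply: geB => //; apply: (ge_le (n := 1 + 0)); first by rewrite addr0.
  apply: geM; last by apply/giq.
  by apply: geB => //; apply: UX.
have Fc : forall y z n, U y -> U z -> ge (y - z) n -> ge (F y - F z) (n + 1).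
  move=> y z n hy hz hn.
  have e : y ^+ q = z ^+ q + (y - z) * S q y z by rewrite /S -subrXX addrC subrK.
  have -> : F y - F z = (y - z) * ((q%:R - S q y z) * iq).
    rewrite /F e /iq; field; exact: qnz.
  apply: (ge_le (n := n + (1 + 0))); first by rewrite addr0.
  apply: geM => //; apply: geM; first exact: S_near_q.
  by apply/giq.
pose u := fun n : nat => iter n F 1.
have uU : forall n, U (u n).
  by elim=> [|n ih]; [exact: U1 | exact: FU].
have ustep : forall n : nat, ge (u n.+1 - u n) (n.+1)%:Z.
  elim=> [|n ih]; first exact: FU U1.
  have h := Fc _ _ _ (uU n.+1) (uU n) ih.
  by apply: ge_le h; lia.
have ucau : forall i k : nat, ge (u (i + k)%N - u i) i%:Z.
  move=> i; elim=> [|k ih]; first by rewrite addn0 subrr; apply: ge0.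
  rewrite addnS -(subrK (u (i + k)%N) (u (i + k).+1)) -addrA.
  apply: geD => //; apply: ge_le (ustep _); rewrite lez_nat; apply: leqW; exact: leq_addr.
have ucau2 : forall n : int, exists N : nat, forall i j : nat, (N <= i)%N -> (N <= j)%N ->
    ge (u i - u j) n.
  move=> n; exists `|n|%N => i j hi hj.
  have hn : (n <= `|n|%N%:Z)%R by rewrite abszE ler_norm.
  have [hij|hji] := leqP i j.
  - rewrite -opprB; apply: geN; rewrite -(subnKC hij).
    apply: ge_le (ucau _ _); apply: le_trans hn _; by rewrite lez_nat.
  - rewrite -(subnKC (ltnW hji)).
    apply: ge_le (ucau _ _); apply: le_trans hn _; by rewrite lez_nat.
have [l hl] := vp_complete ucau2.
have lU : U l.
  have [N hN] := hl 1%R.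
  rewrite /U (_ : l - 1 = (u N - 1) - (u N - l)); last by ring.
  by apply: geB; [exact: uU | exact: hN].
exists l; split => //.
have Fl : F l - l = 0.
  apply: ge_all0 => n.
  have [N hN] := hl n.
  rewrite (_ : F l - l = (F l - F (u N)) + (u N.+1 - l)); last by rewrite /u /= ; ring.
  apply: geD; last by apply: hN; exact: leqnSn.
  apply: (ge_le (n := n + 1)); first by lia.
  apply: Fc lU (uU N) _.
  by rewrite -opprB; apply: geN; apply: hN.
move: Fl; rewrite /F addrAC subrr add0r => /eqP.
by rewrite oppr_eq0 mulf_eq0 invr_eq0 (negbTE qnz) orbF subr_eq0 => /eqP.
Qed.

Lemma gt_ge {p} {Qp : padic_field p} {x : Qp} {c : int} :
  (c%:E < vp x)%E -> ge x (c + 1).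
Proof.
rewrite /ge; case: (vp x) => [d| |] //=.
- by rewrite !lte_fin lee_fin => h; rewrite lezD1.
- by move=> _; apply: leey.
Qed.

Lemma div_ge {p} {Qp : padic_field p} {f g : Qp} {c} :
  vp g = c%:E -> (vp g <= vp f)%E -> ge (f / g) 0.
Proof.
move=> hg hfg; rewrite /ge vpM (vp_inv hg).
move: hfg; rewrite hg; case: (vp f) => [d| |] //=.
- by rewrite -EFinD !lee_fin subr_ge0.
all: try by move=> _; apply: leey.
Qed.

Lemma ratio_eq {p} {Qp : padic_field p} q (h g f : Qp) :
  g != 0 -> h ^+ q = g ^+ q + p%:R * f ^+ q ->
  (h / g) ^+ q = 1 + p%:R * (f / g) ^+ q.
Proof.
move=> gnz e; rewrite !expr_div_n e mulrDl divff ?expf_neq0 //.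
by rewrite mulrA.
Qed.

Theorem proposition4p7 (p : nat) (Qp : padic_field p) (X : topologicalType)
  (q : nat) :
  prime p -> compact [set: X] -> prime q -> q != p ->
  forall f g : X -> Qp, pcont f -> pcont g ->
  (pdivides g f <->
   exists h : X -> Qp, pcont h /\
     forall x : X, h x ^+ q = g x ^+ q + p%:R * f x ^+ q).
Proof.
move=> pp _ pq qp f g hf hg.
have q0 : (0 < q)%N := prime_gt0 pq.
have vpp := vp_p (Qp:=Qp) pp.
split.
- move=> hd.
  have ex : forall x, exists y : Qp, y ^+ q = g x ^+ q + p%:R * f x ^+ q /\
      (g x = 0 -> y = 0) /\ (g x != 0 -> U (y / g x)).
    move=> x; have [gz|gnz] := eqVneq (g x) 0.
    + have fz : f x = 0.
        apply/eqP; rewrite -vp_eq_pinfty; have := hd x; rewrite gz vp0.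
        by rewrite leye_eq.
      exists 0; rewrite gz fz !expr0n (gtn_eqF q0) /= mulr0 addr0; split => //; split => //.
    + have [c hc] := vp_fin gnz.
      have s0 : ge (f x / g x) 0 := div_ge hc (hd x).
      have Ua : U (1 + p%:R * (f x / g x) ^+ q).
        rewrite /U addrAC subrr add0r.
        apply: (ge_le (n := 1 + 0 *+ q)); first by rewrite mul0rn addr0.
        by apply: geM; [rewrite /ge vpp | exact: geX].
      have [r [Ur er]] := root_exists q _ pq qp Ua.
      exists (g x * r); split.
        by rewrite exprMn er expr_div_n; field; rewrite expf_neq0.
      split; first by move=> e; move: gnz; rewrite e eqxx.
      by move=> _; rewrite [g x * r]mulrC mulfK.
  have [h hh] := choice ex.
  exists h; split; last by move=> x; case: (hh x).
  move=> x n.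
  have [gz|gnz] := eqVneq (g x) 0.
  + have hx0 : h x = 0 by case: (hh x) => _ [] /(_ gz).
    apply: filterS (hg x n) => y /= Gy.
    rewrite hx0 subr0; rewrite gz subr0 in Gy.
    have [gyz|gynz] := eqVneq (g y) 0.
    * have -> : h y = 0 by case: (hh y) => _ [] /(_ gyz).
      exact: ge0.
    * have Ur : U (h y / g y) by case: (hh y) => _ [] _ /(_ gynz).
      rewrite -(divfK gynz (h y)).
      apply: (ge_le (n := 0 + n)); first by rewrite add0r.
      exact: geM (U_ge0 Ur) Gy.
  + have [c hc] := vp_fin gnz.
    have Ur0 : U (h x / g x) by case: (hh x) => _ [] _ /(_ gnz).
    pose M := Num.max n (c + 1).
    have nM : (n <= M)%R by rewrite le_max lexx.
    have cM : (c + 1 <= M)%R by rewrite le_max lexx orbT.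
    apply: filterS2 (hg x M) (hf x M) => y /= Gy Fy.
    have Gy1 : ge (g y - g x) (c + 1) := ge_le cM Gy.
    have hcy : vp (g y) = c%:E.
      by rewrite -(subrK (g x) (g y)) addrC; apply: ge_strict hc Gy1.
    have gynz : g y != 0 by rewrite -vp_eq_pinfty hcy.
    have Ur1 : U (h y / g y) by case: (hh y) => _ [] _ /(_ gynz).
    have -> : h y - h x = (g y - g x) * (h y / g y) + g x * (h y / g y - h x / g x).
      by field; apply/andP; split.
    apply: geD.
      apply: (ge_le (n := M + 0)); first by rewrite addr0.
      exact: geM Gy (U_ge0 Ur1).
    apply: (ge_le (n := c + (n - c))); first by rewrite addrC subrK.
    apply: geM; first by rewrite /ge hc.
    apply: (U_root_diff _ pq qp Ur1 Ur0).
    rewrite (ratio_eq q (h y) (g y) (f y) gynz (proj1 (hh y))).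
    rewrite (ratio_eq q (h x) (g x) (f x) gnz (proj1 (hh x))).
    rewrite (_ : forall A B : Qp, (1 + p%:R * A) - (1 + p%:R * B) = p%:R * (A - B));
      last by move=> A B; ring.
    apply: (ge_le (n := 1 + ((n - c - 1) + 0 *+ q.-1))).
      by rewrite mul0rn addr0; lia.
    apply: geM; first by rewrite /ge vpp.
    apply: ge_powdiff; [exact: div_ge hcy (hd y) | exact: div_ge hc (hd x) | ].
    have -> : f y / g y - f x / g x =
        ((f y - f x) * g x - f x * (g y - g x)) * ((g y)^-1 * (g x)^-1).
      by field; apply/andP; split.
    apply: (ge_le (n := (M + c) + (- c + - c))); first by lia.
    apply: geM; last first.
      by apply: geM; rewrite /ge; [rewrite (vp_inv hcy) | rewrite (vp_inv hc)].
    apply: geB; first by apply: geM Fy _; rewrite /ge hc.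
    rewrite [M + c]addrC; apply: geM Gy; by rewrite /ge -hc; apply: hd.
- move=> [h [_ hh]] x.
  have [fz|fnz] := eqVneq (f x) 0; first by rewrite fz vp0; apply: leey.
  have [c hc] := vp_fin fnz.
  rewrite hc leNgt; apply/negP => hlt.
  have G1 := gt_ge hlt.
  have q2 : (1 < q)%N := prime_gt1 pq.
  have vpf : vp (p%:R * f x ^+ q) = (1 + c *+ q)%:E.
    by rewrite vpM vpp (vpX q hc) -EFinD.
  have gq : ge (g x ^+ q) ((1 + c *+ q) + 1).
    apply: ge_le (geX q G1); rewrite mulrnDl.
    have h2 : ((2%N)%:R <= 1 *+ q :> int)%R by rewrite ler_nat.
    move: h2; set C := c *+ q; set Q := 1 *+ q; clearbody C Q => h2; lia.
  have vh : vp (h x ^+ q) = (1 + c *+ q)%:E.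
    by rewrite hh addrC; apply: ge_strict vpf gq.
  have hnz : h x != 0.
    by apply/eqP => e; move: vh; rewrite e expr0n (gtn_eqF q0) vp0.
  have [m hm] := vp_fin hnz.
  move: vh; rewrite (vpX q hm) => /eqP; rewrite eqe => /eqP e.
  have ed : (m - c) *+ q = 1 by rewrite mulrnBl e addrK.
  have [hd|hd] := lerP (m - c) 0.
    by have := mulrn_wle0 q hd; rewrite ed ler10.
  have h1 : (1 <= m - c)%R by lia.
  have : (1 *+ q <= (m - c) *+ q)%R by rewrite lerMn2r h1 orbT.
  rewrite ed => hq1.
  have : ((q%:R : int) <= (1%N)%:R)%R by exact: hq1.
  by rewrite ler_nat leqNgt q2.
Qed.
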